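(* Let $n\ge2$, $\omega>0$, $G>0$, masses $m_1,\ldots,m_n>0$, pairwise distinct points $\vec R^0_1,\ldots,\vec R^0_n\in\mathbb{R}^3$ and unit vectors $\hat n_1,\ldots,\hat n_n\in\mathbb{R}^3$ be arbitrary, and let $g$ be the real symmetric $n\times n$ matrix $$g_{jj}=\sum_{\ell\ne j}\frac{Gm_\ell}{d_{j\ell}^3\,\omega}\big(1-3\cos^2\theta_{j\ell}\big),\qquad g_{jk}=-\frac{G\sqrt{m_jm_k}}{d_{jk}^3\,\omega}\big(\cos\varphi_{jk}+3\cos\theta_{jk}\cos\theta_{kj}\big)\ (j\ne k).$$ Then $$\|g\|_\infty\le\gamma\,\min\{6(n-1),\ C_1\ln(n-1)+C_2\},\qquad \gamma=\frac{Gm}{d^3\omega},$$ where $m:=\max_jm_j$, $d:=\min_{j\ne\ell}d_{j\ell}$, and $C_1,C_2$ are universal constants independent of $n$; one can take $C_1=288$, $C_2=966$.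
   Context: $\vec d_{jk}=\vec R^0_k-\vec R^0_j$, $d_{jk}=\|\vec d_{jk}\|$, $\hat d_{jk}=\vec d_{jk}/d_{jk}$; angles defined by $\cos\theta_{jk}=\hat n_j\cdot\hat d_{jk}$, $-\cos\theta_{kj}=\hat n_k\cdot\hat d_{jk}$, $\cos\varphi_{jk}=\hat n_j\cdot\hat n_k$. $\|\cdot\|_\infty$ denotes the operator norm. *)

(* Defs.v *)
From HB Require Import structures.
From mathcomp Require Import all_boot all_order all_algebra.
From mathcomp Require Import all_classical all_reals all_analysis.
Set Implicit Arguments. Unset Strict Implicit. Unset Printing Implicit Defensive.
Import Order.TTheory GRing.Theory Num.Theory.
Local Open Scope classical_set_scope.
Local Open Scope ring_scope.

Section Defs.
Variable R : realType.

Definition dot3 (u v : 'rV[R]_3) : R := \sum_(i < 3) u 0 i * v 0 i.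
Definition norm3 (u : 'rV[R]_3) : R := Num.sqrt (dot3 u u).

Definition enorm n (x : 'cV[R]_n) : R := Num.sqrt (\sum_(i < n) x i 0 ^+ 2).

Definition opnorm n (A : 'M[R]_n) : R :=
  sup [set enorm (A *m x) | x in [set x : 'cV[R]_n | enorm x <= 1]].

Variables (n : nat) (P : 'I_n -> 'rV[R]_3) (nh : 'I_n -> 'rV[R]_3).

Definition dvec (j k : 'I_n) : 'rV[R]_3 := P k - P j.
Definition dist (j k : 'I_n) : R := norm3 (dvec j k).
Definition dhat (j k : 'I_n) : 'rV[R]_3 := (dist j k)^-1 *: dvec j k.
(* cos theta_{jk} = n_j . dhat_{jk};  hence cos theta_{kj} = n_k . dhat_{kj}
   = - n_k . dhat_{jk}, as in the paper *)
Definition costheta (j k : 'I_n) : R := dot3 (nh j) (dhat j k).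
Definition cosphi (j k : 'I_n) : R := dot3 (nh j) (nh k).

Variables (G w : R) (m : 'I_n -> R).

Definition gmat : 'M[R]_n :=
  \matrix_(j, k)
    if j == k then
      \sum_(l < n | l != j)
         G * m l / (dist j l ^+ 3 * w) * (1 - 3 * costheta j l ^+ 2)
    else
      - (G * Num.sqrt (m j * m k) / (dist j k ^+ 3 * w))
        * (cosphi j k + 3 * costheta j k * costheta k j).

Definition mmax : R := sup [set r | exists j, r = m j].
Definition dmin : R := inf [set r | exists j l, j != l /\ r = dist j l].

Definition gamma : R := G * mmax / (dmin ^+ 3 * w).
End Defs.

(* Main.v *)
Require Import Defs.
From HB Require Import structures.
From mathcomp Require Import all_boot all_order all_algebra.
From mathcomp Require Import all_classical all_reals all_analysis.
From mathcomp.algebra_tactics Require Import ring lra.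
From mathcomp.zify Require Import zify.
Import Order.TTheory GRing.Theory Num.Theory.
Local Open Scope ring_scope.
Section Analytic.
Variable R : realType.

Lemma kappa_ex (N : nat) : exists k, (N < (2*k+1)^3)%N.
Proof. exists N; rewrite !expnS expn0; nia. Qed.

Definition kappa N := ex_minn (kappa_ex N).

Lemma kappa_lt N : (N < (2 * kappa N + 1)^3)%N.
Proof. rewrite /kappa; by case: ex_minnP. Qed.

Lemma kappa_min N k : (N < (2*k+1)^3)%N -> (kappa N <= k)%N.
Proof. rewrite /kappa; case: ex_minnP => m _ H; exact: H. Qed.

Lemma kappa_eq K r : ((2*K+1)^3 <= r < (2*K+3)^3)%N -> kappa r = K.+1.
Proof.
move=> /andP[h1 h2]; apply/eqP; rewrite eqn_leq; apply/andP; split.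
  by apply: kappa_min; have -> : (2 * K.+1 + 1 = 2*K+3)%N by lia.
rewrite ltnNge; apply/negP => hk.
have := kappa_lt r; rewrite ltnNge => /negP; apply.
apply: leq_trans h1; rewrite leq_exp2r //; lia.
Qed.

Definition hh (k : nat) : R := if (k <= 2)%N then 1 else 42 / ((2*k-1)%:R)^+3.

Lemma hh_ge0 k : 0 <= hh k.
Proof. rewrite /hh; case: ifP => // _; apply: divr_ge0 => //; exact: exprn_ge0. Qed.

Lemma hh_le1 k : hh k <= 1.
Proof.
rewrite /hh; case: ifP => // /negbT; rewrite -ltnNge => hk.
rewrite ler_pdivrMr ?exprn_gt0 ?ltr0n; last lia.
rewrite mul1r -natrX ler_nat; apply: (@leq_trans (5^3)) => //.
all: try (rewrite leq_exp2r //; lia).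
all: done.
Qed.

Lemma hh_mono k l : (k <= l)%N -> hh l <= hh k.
Proof.
move=> kl; rewrite /hh; case: ifP => hl; first by rewrite ifT //; lia.
case: ifP => hk; first by have := hh_le1 l; rewrite /hh hl.
rewrite ler_pdivrMr ?exprn_gt0 ?ltr0n; last lia.
rewrite mulrAC ler_pdivlMr ?exprn_gt0 ?ltr0n; last lia.
rewrite ler_pM2l // -!natrX ler_nat leq_exp2r //; first lia.
all: done.
Qed.

Definition psi N := hh (kappa N).
Definition Phi N := \sum_(0 <= r < N) psi r.+1.

Lemma Phi_mono N M : (N <= M)%N -> Phi N <= Phi M.
Proof.
move=> NM; rewrite /Phi (big_cat_nat (leq0n N) NM) /= lerDl.
apply: sumr_ge0 => i _; exact: hh_ge0.
Qed.

End Analytic.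
Section Analytic2.
Variable R : realType.
Local Notation hh := (@hh R).
Local Notation Phi := (@Phi R).

Lemma ln_gap (a b : R) : 0 < a -> 0 < b -> 1 - a / b <= ln b - ln a.
Proof.
move=> a0 b0.
have h := @le_ln1Dx R (a / b - 1).
have e : 1 + (a / b - 1) = a / b by ring.
rewrite e ln_div ?posrE // in h.
have : ln a - ln b <= a / b - 1 by apply: h; rewrite ltrBrDr addNr divr_gt0.
lra.
Qed.

End Analytic2.
Section Analytic3.
Variable R : realType.
Local Notation hh := (@hh R).
Local Notation Phi := (@Phi R).
Local Notation psi := (@psi R).

Lemma Phi_shell K : Phi ((2*K+5)^3 - 1) =
  Phi ((2*K+3)^3 - 1) + ((2*K+5)^3 - (2*K+3)^3)%:R * hh K.+2.
Proof.
have le35 : ((2*K+3)^3 <= (2*K+5)^3)%N by rewrite leq_exp2r //; lia.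
have pos3 : (0 < (2*K+3)^3)%N by rewrite expn_gt0; lia.
have H : ((2*K+3)^3 - 1 <= (2*K+5)^3 - 1)%N by lia.
rewrite /Phi (big_cat_nat (leq0n _) H) /=; congr (_ + _).
rewrite (eq_big_nat _ _ (F2 := fun=> hh K.+2)); last first.
  move=> i /andP[i1 i2]; rewrite /psi (@kappa_eq K.+1) //.
  have -> : (2 * K.+1 + 1 = 2*K+3)%N by lia.
  have -> : (2 * K.+1 + 3 = 2*K+5)%N by lia.
  apply/andP; split; lia.
rewrite sumr_const_nat mulr_natl; congr (_ *+ _); lia.
Qed.

End Analytic3.
Section Analytic4.
Variable R : realType.
Local Notation hh := (@hh R).
Local Notation Phi := (@Phi R).

Lemma shell_ineq K : ((2*K+5)^3 - (2*K+3)^3)%:R * hh K.+2 <=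
  288 / (2*K+3)%:R + 100 / ((K+1)%:R * (K+2)%:R) :> R.
Proof.
case: K => [|K].
  rewrite /hh /=.
  have -> : ((2*0+5)^3 - (2*0+3)^3 = 98)%N by [].
  have -> : ((2*0+3) = 3)%N by [].
  have -> : ((0+1) = 1)%N by [].
  have -> : ((0+2) = 2)%N by [].
  rewrite mul1r mulr1; lra.
have e : ((2*K.+1+5)^3 - (2*K.+1+3)^3 = 24*(K+3)^2 + 2)%N.
  rewrite !expnS expn0; nia.
rewrite e; clear e.
rewrite /hh.
have -> : (K.+3 <= 2)%N = false by [].
have -> : (2 * K.+3 - 1 = 2 * K + 5)%N by lia.
have -> : (2 * K.+1 + 3 = 2 * K + 5)%N by lia.
have -> : (K.+1 + 1 = K + 2)%N by lia.
have -> : (K.+1 + 2 = K + 3)%N by lia.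
rewrite !(natrD, natrM, natrX).
set x := (K%:R : R).
have x0 : 0 <= x by rewrite /x.
have p5 : 0 < 2 * x + 5 by lra.
have p2 : 0 < x + 2 by lra.
have p3 : 0 < x + 3 by lra.
rewrite -subr_ge0.
have -> : 288 / (2 * x + 5) + 100 / ((x + 2) * (x + 3)) -
   (24 * (x + 3) ^+ 2 + 2) * (42 / (2 * x + 5) ^+ 3) =
   (764 + 3492 * x + 3468 * x^+2 + 1232 * x^+3 + 144 * x^+4) /
   ((2 * x + 5) ^+ 3 * ((x + 2) * (x + 3))).
  field; apply/and3P; split; apply: lt0r_neq0 => //.
apply: divr_ge0; last by apply: mulr_ge0; [apply: exprn_ge0|apply: mulr_ge0]; lra.
have := exprn_ge0 2 x0; have := exprn_ge0 3 x0; have := exprn_ge0 4 x0.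
lra.
Qed.

End Analytic4.
Section Analytic5.
Variable R : realType.
Local Notation hh := (@hh R).
Local Notation Phi := (@Phi R).
Local Notation psi := (@psi R).

Lemma Phi26 : Phi 26 = 26.
Proof.
rewrite /Phi (eq_big_nat _ _ (F2 := fun=> 1)); last first.
  move=> i /andP[_ i2]; rewrite /psi /hh ifT //.
  apply: (@leq_trans 1); last by [].
  by apply: kappa_min.
by rewrite sumr_const_nat subn0.
Qed.

Lemma Phi_pot K : Phi ((2*K+3)^3 - 1) <=
  144 * ln ((2*K+1)%:R : R) + 126 - 100 / (K+1)%:R.
Proof.
elim: K => [|K IH].
  have -> : ((2*0+3)^3 - 1 = 26)%N by [].
  rewrite Phi26 /= ln1 mulr0 add0r divr1; lra.
have -> : (2*K.+1+3 = 2*K+5)%N by lia.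
rewrite Phi_shell.
have S := shell_ineq R K.
have -> : (2*K.+1+1 = 2*K+3)%N by lia.
have -> : (K.+1+1 = K+2)%N by lia.
have G : 1 - ((2*K+1)%:R : R) / (2*K+3)%:R <= ln (2*K+3)%:R - ln (2*K+1)%:R.
  by apply: ln_gap; rewrite ltr0n; lia.
move: IH S G; rewrite !(natrD, natrM).
set x := (K%:R : R).
have x0 : 0 <= x by rewrite /x.
move=> IH S G.
have e1 : 1 - (2 * x + 1) / (2 * x + 3) = 2 / (2 * x + 3).
  by field; apply: lt0r_neq0; lra.
have e2 : 100 / (x + 1) - 100 / (x + 2) = 100 / ((x + 1) * (x + 2)).
  by field; apply/andP; split; apply: lt0r_neq0; lra.
rewrite e1 in G.
have G2 : 144 * (2 / (2 * x + 3)) <= 144 * (ln (2 * x + 3) - ln (2 * x + 1)).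
  by rewrite ler_pM2l.
lra.
Qed.

End Analytic5.
Section Analytic6.
Variable R : realType.
Local Notation Phi := (@Phi R).

Lemma Phi_log N : (1 <= N)%N -> Phi N <= 48 * ln (N%:R : R) + 126.
Proof.
move=> N1.
have := kappa_lt N; have := @kappa_min N.
case: (kappa N) => [|K0] kmin klt; first by move: klt; rewrite muln0 add0n exp1n; lia.
have e : (2 * K0.+1 + 1 = 2*K0+3)%N by lia.
rewrite e in klt.
have low : ((2*K0+1)^3 <= N)%N.
  rewrite leqNgt; apply/negP => H; have := kmin K0 H; lia.
apply: (@le_trans _ _ (Phi ((2*K0+3)^3 - 1))); first by apply: Phi_mono; lia.
apply: (le_trans (Phi_pot R K0)).
have h1 : 0 <= 100 / ((K0+1)%:R : R) by apply: divr_ge0.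
suff : 144 * ln ((2 * K0 + 1)%:R : R) <= 48 * ln (N%:R : R) by lra.
have p1 : (0 : R) < (2 * K0 + 1)%:R by rewrite ltr0n; lia.
have -> : 144 * ln ((2 * K0 + 1)%:R : R) = 48 * ln (((2 * K0 + 1)%:R : R) ^+ 3).
  by rewrite lnXn // -mulr_natr; lra.
rewrite ler_pM2l // ler_ln ?posrE ?exprn_gt0 ?ltr0n //; last lia.
by rewrite -natrX ler_nat.
Qed.

End Analytic6.
Section Geom.
Variables (R : realType) (n : nat) (P : 'I_n -> 'rV[R]_3) (d : R) (j : 'I_n).
Hypothesis d0 : 0 < d.
Hypothesis dsep : forall l l', l != l' -> d <= dist P l l'.

Definition sc : R := 577/1000 * d.

Lemma sc_gt0 : 0 < sc.
Proof. rewrite /sc; apply: mulr_gt0; last by []. lra. Qed.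

Lemma dot3_self_ge0 (u : 'rV[R]_3) : 0 <= dot3 u u.
Proof. rewrite /dot3; apply: sumr_ge0 => i _; by rewrite -expr2 sqr_ge0. Qed.

Lemma coord_le (u : 'rV[R]_3) i : `|u 0 i| <= norm3 u.
Proof.
rewrite /norm3 -sqrtr_sqr ler_sqrt ?dot3_self_ge0 // /dot3 (bigD1 i) //= expr2 lerDl.
by apply: sumr_ge0 => l _; rewrite -expr2 sqr_ge0.
Qed.

Lemma dist_coord l l' i : `|P l' 0 i - P l 0 i| <= dist P l l'.
Proof. by have := coord_le (dvec P l l') i; rewrite /dvec !mxE. Qed.

Lemma dist_self l : dist P l l = 0.
Proof.
rewrite /dist /norm3 /dot3 /dvec (eq_bigr (fun=> 0)) ?big1 ?sqrtr0 // => i _.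
by rewrite !mxE subrr mul0r.
Qed.

Lemma close_dist l l' : (forall i, `|P l' 0 i - P l 0 i| <= sc) -> dist P l l' < d.
Proof.
move=> H.
have -> : d = Num.sqrt (d ^+ 2) by rewrite sqrtr_sqr gtr0_norm.
rewrite /dist /norm3 ltr_sqrt ?exprn_gt0 //.
apply: (@le_lt_trans _ _ (\sum_(i < 3) sc ^+ 2)).
  rewrite /dot3; apply: ler_sum => i _; rewrite /dvec !mxE -expr2 -real_normK ?num_real //.
  by rewrite !expr2; apply: ler_pM; rewrite ?normr_ge0 ?H.
rewrite sumr_const card_ord /sc exprMn.
have : 0 < d ^+ 2 by rewrite exprn_gt0.
rewrite -[_ *+ 3]mulr_natr [(577/1000)^+2]expr2.
lra.
Qed.

Definition cell (l : 'I_n) (i : 'I_3) : int :=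
  Num.floor ((P l 0 i - P j 0 i) / sc + 1/2).

Lemma floor_close (a b : R) : Num.floor a = Num.floor b -> `|a - b| < 1.
Proof.
move=> e.
have h1 := Num.Theory.floor_le a; have h2 := Num.Theory.floorD1_gt a.
have h3 := Num.Theory.floor_le b; have h4 := Num.Theory.floorD1_gt b.
rewrite e intrD in h1 h2; rewrite intrD in h4.
rewrite ltr_norml; apply/andP; split; lra.
Qed.

Lemma cell_inj l l' : (forall i, cell l i = cell l' i) -> l = l'.
Proof.
move=> H; apply/eqP/negPn/negP => /dsep; rewrite leNgt => /negP; apply.
apply: close_dist => i.
have := @floor_close _ _ (H i).
have -> : (P l 0 i - P j 0 i) / sc + 1 / 2 - ((P l' 0 i - P j 0 i) / sc + 1 / 2)
   = (P l 0 i - P l' 0 i) / sc by field; apply: lt0r_neq0; exact: sc_gt0.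
have hs := sc_gt0.
rewrite normrM (gtr0_norm (_ : 0 < sc^-1)) ?invr_gt0 // => h.
have : `|P l 0 i - P l' 0 i| < sc.
  by rewrite -(mul1r sc) -ltr_pdivrMr.
by rewrite distrC => /ltW.
Qed.

Lemma cell_range l rho i : dist P j l <= rho ->
  - Num.floor (rho / sc + 1/2) <= cell l i <= Num.floor (rho / sc + 1/2).
Proof.
move=> hl; have hc := dist_coord j l i.
have hs := sc_gt0.
have hb : `|P l 0 i - P j 0 i| <= rho by apply: le_trans hl.
move: hb; rewrite ler_norml => /andP[hb1 hb2].
apply/andP; split.
  rewrite /cell Num.Theory.floor_ge_int intrN.
  have := Num.Theory.floorD1_gt (rho / sc + 1 / 2); rewrite intrD.
  have : - rho / sc <= (P l 0 i - P j 0 i) / sc.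
    by rewrite ler_pM2r ?invr_gt0.
  rewrite mulNr. lra.
rewrite /cell; apply: Num.Theory.le_floor.
rewrite lerD2r ler_pM2r ?invr_gt0 //.
Qed.

Lemma count_ball (T : {set 'I_n}) rho : j \notin T -> 0 <= rho ->
  (forall l, l \in T -> dist P j l <= rho) ->
  (#|T| < (2 * `|Num.floor (rho / sc + 1/2)|%N + 1)^3)%N.
Proof.
move=> jT r0 HT.
have hs := sc_gt0.
set k := Num.floor (rho / sc + 1/2).
have k0 : 0 <= k.
  rewrite /k Num.Theory.floor_ge0; apply: addr_ge0; last by [].
  by apply: divr_ge0 => //; apply: ltW.
set K := `|k|%N.
pose f := fun l => [ffun i : 'I_3 => (inord `|(cell l i + (K:int))%R|%N : 'I_(2*K).+1)].
have Hr : forall l, l \in j |: T -> forall i, - k <= cell l i <= k.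
  move=> l; rewrite in_setU1 => /orP[/eqP -> | lT] i; apply: cell_range.
    by rewrite dist_self.
  exact: HT.
have inj : {in j |: T &, injective f}.
  move=> l l' hl hl' e; apply: cell_inj => i.
  have := congr1 (fun g : {ffun 'I_3 -> 'I_(2*K).+1} => nat_of_ord (g i)) e; rewrite /= !ffunE.
  have := Hr l hl i; have := Hr l' hl' i => /andP[a1 a2] /andP[b1 b2].
  rewrite !inordK; first lia.
  - lia.
  - lia.
have := card_in_imset inj.
rewrite cardsU1 jT => e.
have := max_card (f @: (j |: T)).
rewrite e card_ffun !card_ord.
have -> : (2 * K + 1 = (2 * K).+1)%N by lia.
by [].
Qed.

Lemma term_bound rho : d <= rho ->
  (d / rho)^+3 <= hh R `|Num.floor (rho / sc + 1/2)|%N.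
Proof.
move=> drho.
have hs := sc_gt0.
have r0 : 0 < rho by apply: lt_le_trans drho.
set k := Num.floor (rho / sc + 1/2).
have k0 : 0 <= k.
  rewrite /k Num.Theory.floor_ge0; apply: addr_ge0; last by [].
  by apply: divr_ge0 => //; apply: ltW.
set K := `|k|%N.
have q0 : 0 <= d / rho by apply: divr_ge0; apply: ltW.
case: (leqP K 2) => hK.
  rewrite /hh ifT //; apply: exprn_ile1 => //.
  by rewrite ler_pdivrMr // mul1r.
rewrite /hh ifF; last by apply/negbTE; rewrite -ltnNge.
have kK : (K%:R : R) = k%:~R.
  by rewrite pmulrn /K; congr (_ *~ _); lia.
have hf := Num.Theory.floor_le (rho / sc + 1/2).
rewrite -/k -kK in hf.
have K3 : (3 : R) <= K%:R by rewrite ler_nat.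
have eD : ((2 * K - 1)%:R : R) = 2 * K%:R - 1.
  by rewrite natrB ?natrM //; lia.
rewrite eD.
set D := 2 * K%:R - 1.
have D0 : 0 < D by rewrite /D; lra.
have h1 : 577 / 2000 * d * D <= rho.
  have : K%:R - 1/2 <= rho / sc by lra.
  rewrite ler_pdivlMr // /sc /D => h.
  have e : 577 / 2000 * d * (2 * K%:R - 1) = (K%:R - 1/2) * (577/1000 * d) by field.
  by rewrite e.
have h2 : d / rho * D <= 2000 / 577.
  rewrite mulrAC ler_pdivrMr; last exact: r0.
  Timeout 20 lra.
have dD0 : 0 <= d / rho * D by apply: mulr_ge0 => //; exact: ltW.
have h3 : (d / rho * D)^+3 <= (2000 / 577)^+3.
  { Timeout 20 rewrite lerXn2r ?nnegrE.
    all: first [exact: h2 | exact: dD0 | exact: isT | lra]. }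
have h4 : (2000 / 577 : R)^+3 <= 42.
  rewrite !exprS expr0 !mulr1. Timeout 20 lra.
rewrite ler_pdivlMr; last by apply: exprn_gt0.
rewrite -exprMn.
exact: le_trans h3 h4.
Qed.

Lemma sum_Phi N : forall T : {set 'I_n}, #|T| = N -> j \notin T ->
  \sum_(l in T) (d / dist P j l)^+3 <= Phi R N.
Proof.
elim: N => [|N IH] T hT jT.
  have -> : T = finset.set0 by apply/eqP; rewrite -cards_eq0 hT.
  by rewrite big_set0 /Phi big_geq.
have [l0 l0T] : exists l0, l0 \in T.
  by apply/set0Pn; rewrite -card_gt0 hT.
have [lm lmT0 lmmax] := @arg_maxP _ _ _ l0 (mem T) (dist P j) l0T.
have lmT : lm \in T := lmT0.
rewrite (big_setD1 lm lmT) /= /Phi big_nat_recr //= addrC.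
apply: lerD.
  apply: IH; first by have := cardsD1 lm T; rewrite lmT hT add1n => -[].
  by rewrite in_setD1 negb_and jT orbT.
have jlm : j != lm by apply/eqP => e; move: jT; rewrite e lmT.
have drho := dsep _ _ jlm.
apply: (le_trans (term_bound _ drho)).
rewrite /psi; apply: hh_mono; apply: kappa_min.
rewrite -hT; apply: count_ball => //.
  by apply: le_trans drho; apply: ltW.
Qed.

End Geom.
Section Schur.
Variable R : realType.

Lemma wcs (n : nat) (a y : 'I_n -> R) : (forall k, 0 <= a k) ->
  (\sum_k a k * y k)^+2 <= (\sum_k a k) * (\sum_k a k * y k ^+ 2).
Proof.
move=> a0.
have E1 : (\sum_k a k * y k)^+2 = \sum_k \sum_l (a k * a l * (y k * y l)).
  rewrite expr2 mulr_suml; apply: eq_bigr => k _; rewrite mulr_sumr.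
  by apply: eq_bigr => l _; ring.
have E2 : (\sum_k a k) * (\sum_k a k * y k ^+ 2) = \sum_k \sum_l (a k * a l * y l ^+ 2).
  rewrite mulr_suml; apply: eq_bigr => k _; rewrite mulr_sumr.
  by apply: eq_bigr => l _; ring.
have E3 : (\sum_k a k) * (\sum_k a k * y k ^+ 2) = \sum_k \sum_l (a k * a l * y k ^+ 2).
  rewrite E2 exchange_big; apply: eq_bigr => k _; apply: eq_bigr => l _; ring.
have E4 : (\sum_k a k) * (\sum_k a k * y k ^+ 2) + (\sum_k a k) * (\sum_k a k * y k ^+ 2)
   = \sum_k \sum_l (a k * a l * (y k ^+ 2 + y l ^+ 2)).
  rewrite {1}E3 E2 -big_split; apply: eq_bigr => k _; rewrite -big_split.
  by apply: eq_bigr => l _; rewrite mulrDr.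
have E5 : (\sum_k a k * y k)^+2 + (\sum_k a k * y k)^+2
   = \sum_k \sum_l (a k * a l * (2 * (y k * y l))).
  rewrite E1 -big_split; apply: eq_bigr => k _; rewrite -big_split.
  apply: eq_bigr => l _; match goal with |- ?f ?u ?v = ?w => change (u + v = w) end; ring.
suff : (\sum_k a k * y k)^+2 + (\sum_k a k * y k)^+2 <=
   (\sum_k a k) * (\sum_k a k * y k ^+ 2) + (\sum_k a k) * (\sum_k a k * y k ^+ 2) by lra.
rewrite E4 E5; apply: ler_sum => k _; apply: ler_sum => l _.
apply: ler_wpM2l; first by apply: mulr_ge0.
have := sqr_ge0 (y k - y l); rewrite sqrrB; lra.
Qed.

Lemma opnorm_le (n : nat) (A : 'M[R]_n) (B : 'I_n -> 'I_n -> R) (L : R) :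
  (forall j k, `|A j k| <= B j k) -> (forall j k, B j k = B k j) ->
  (forall j, \sum_k B j k <= L) -> 0 <= L -> opnorm A <= L.
Proof.
move=> hA hB hL L0.
have B0 : forall j k, 0 <= B j k by move=> j k; apply: le_trans (hA j k).
rewrite /opnorm; apply: ge_sup.
  exists (enorm (A *m 0)), 0 => //=.
  rewrite /enorm (eq_bigr (fun=> 0)) ?big1 ?sqrtr0 // => i _.
  by rewrite mxE expr2 mul0r.
move=> z [x hx <-].
set S := \sum_(k < n) x k 0 ^+ 2.
have S0 : 0 <= S by apply: sumr_ge0 => k _; apply: sqr_ge0.
have S1 : S <= 1.
  by move: hx; rewrite /= /enorm -/S -{1}sqrtr1 ler_sqrt.
rewrite /enorm -(ger0_norm L0) -sqrtr_sqr ler_sqrt ?sqr_ge0 //.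
apply: (@le_trans _ _ (\sum_j (\sum_k B j k * `|x k 0|)^+2)).
  apply: ler_sum => j _; rewrite mxE.
  have hs : 0 <= \sum_k B j k * `|x k 0|.
    by apply: sumr_ge0 => k _; apply: mulr_ge0; rewrite ?normr_ge0.
  rewrite -real_normK ?num_real // lerXn2r ?nnegrE ?normr_ge0 //.
  apply: (le_trans (ler_norm_sum _ _ _)); apply: ler_sum => k _.
  by rewrite normrM; apply: ler_wpM2r; rewrite ?normr_ge0.
apply: (@le_trans _ _ (\sum_j L * (\sum_k B j k * `|x k 0| ^+ 2))).
  apply: ler_sum => j _; apply: (le_trans (wcs _ (B j) (fun k => `|x k 0|) (B0 j))).
  apply: ler_wpM2r; last exact: hL.
  by apply: sumr_ge0 => k _; apply: mulr_ge0; rewrite ?sqr_ge0.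
rewrite -mulr_sumr exchange_big /=.
apply: (@le_trans _ _ (L * \sum_k L * x k 0 ^+ 2)).
  apply: ler_wpM2l => //; apply: ler_sum => k _.
  rewrite -mulr_suml real_normK ?num_real //.
  apply: ler_wpM2r; first exact: sqr_ge0.
  by rewrite (eq_bigr (fun j => B k j)) ?hL // => i _; rewrite hB.
rewrite -mulr_sumr -/S expr2; apply: ler_wpM2l => //.
by rewrite -[X in _ <= X]mulr1; apply: ler_wpM2l.
Qed.

End Schur.
Section Vec.
Variable R : realType.

Lemma cs (n : nat) (a b : 'I_n -> R) :
  (\sum_k a k * b k)^+2 <= (\sum_k a k ^+ 2) * (\sum_k b k ^+ 2).
Proof.
have E1 : (\sum_k a k * b k)^+2 = \sum_k \sum_l (a k * b k * (a l * b l)).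
  rewrite expr2 mulr_suml; apply: eq_bigr => k _; rewrite mulr_sumr.
  by apply: eq_bigr => l _.
have E2 : (\sum_k a k ^+ 2) * (\sum_k b k ^+ 2) = \sum_k \sum_l (a k ^+ 2 * b l ^+ 2).
  rewrite mulr_suml; apply: eq_bigr => k _; rewrite mulr_sumr.
  by apply: eq_bigr => l _.
have E3 : (\sum_k a k ^+ 2) * (\sum_k b k ^+ 2) = \sum_k \sum_l (a l ^+ 2 * b k ^+ 2).
  by rewrite E2 exchange_big.
have E4 : (\sum_k a k ^+ 2) * (\sum_k b k ^+ 2) + (\sum_k a k ^+ 2) * (\sum_k b k ^+ 2)
   = \sum_k \sum_l (a k ^+ 2 * b l ^+ 2 + a l ^+ 2 * b k ^+ 2).
  rewrite {1}E2 E3 -big_split; apply: eq_bigr => k _; rewrite -big_split.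
  by apply: eq_bigr => l _.
have E5 : (\sum_k a k * b k)^+2 + (\sum_k a k * b k)^+2
   = \sum_k \sum_l (a k * b k * (a l * b l) + a k * b k * (a l * b l)).
  rewrite E1 -big_split; apply: eq_bigr => k _; rewrite -big_split.
  by apply: eq_bigr => l _.
suff : (\sum_k a k * b k)^+2 + (\sum_k a k * b k)^+2 <=
   (\sum_k a k ^+ 2) * (\sum_k b k ^+ 2) + (\sum_k a k ^+ 2) * (\sum_k b k ^+ 2) by lra.
rewrite E4 E5; apply: ler_sum => k _; apply: ler_sum => l _.
have := sqr_ge0 (a k * b l - a l * b k).
have -> : (a k * b l - a l * b k) ^+ 2 =
  a k ^+ 2 * b l ^+ 2 + a l ^+ 2 * b k ^+ 2 - 2 * (a k * b k * (a l * b l)) by ring.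
lra.
Qed.

Lemma dot3_cs (u v : 'rV[R]_3) : `|dot3 u v| <= norm3 u * norm3 v.
Proof.
rewrite /norm3 -sqrtrM ?dot3_self_ge0 // -sqrtr_sqr ler_sqrt; last first.
  by apply: mulr_ge0; apply: dot3_self_ge0.
have := @cs 3 (fun i => u 0 i) (fun i => v 0 i).
rewrite /dot3 /=.
have eu : \sum_(i<3) u 0 i * u 0 i = \sum_(k<3) u 0 k ^+ 2.
  by apply: eq_bigr => i _; rewrite expr2.
have ev : \sum_(i<3) v 0 i * v 0 i = \sum_(k<3) v 0 k ^+ 2.
  by apply: eq_bigr => i _; rewrite expr2.
by rewrite eu ev.
Qed.

Lemma dot3C (u v : 'rV[R]_3) : dot3 u v = dot3 v u.
Proof. by rewrite /dot3; apply: eq_bigr => i _; rewrite mulrC. Qed.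

Lemma dot3Z (c : R) (u : 'rV[R]_3) : dot3 (c *: u) (c *: u) = c ^+ 2 * dot3 u u.
Proof.
rewrite /dot3 mulr_sumr; apply: eq_bigr => i _; rewrite !mxE.
Timeout 30 ring.
Qed.

Lemma dot3_eq0 (u : 'rV[R]_3) : dot3 u u = 0 -> u = 0.
Proof.
move=> h; apply/rowP => i; rewrite mxE.
have H0 : forall i : 'I_3, true -> 0 <= u 0 i * u 0 i.
  by move=> k _; rewrite -expr2 sqr_ge0.
have := psumr_eq0P H0 h (i:=i) isT.
by move=> /eqP; rewrite mulf_eq0 orbb => /eqP.
Qed.

End Vec.
Section Main.
Variables (R : realType) (n : nat) (w G : R) (m : 'I_n -> R) (P nh : 'I_n -> 'rV[R]_3).
Hypotheses (n2 : (2 <= n)%N) (w0 : 0 < w) (G0 : 0 < G) (m0 : forall j, 0 < m j)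
  (Pd : forall j k, j != k -> P j != P k) (nh1 : forall j, norm3 (nh j) = 1).

Lemma dist_sym j k : dist P j k = dist P k j.
Proof.
rewrite /dist /norm3 /dvec; congr Num.sqrt.
have -> : P j - P k = (-1) *: (P k - P j) by rewrite scaleN1r opprB.
by rewrite dot3Z expr2 mulrNN !mul1r.
Qed.

Lemma dist_gt0 j k : j != k -> 0 < dist P j k.
Proof.
move=> jk; rewrite /dist /norm3 sqrtr_gt0 lt_def dot3_self_ge0 andbT.
apply/negP => /eqP /dot3_eq0 /eqP; rewrite /dvec subr_eq0 => /eqP e.
by move: (Pd _ _ jk); rewrite e eqxx.
Qed.

Lemma norm3_dhat j k : j != k -> norm3 (dhat P j k) = 1.
Proof.
move=> jk; have h := dist_gt0 _ _ jk.
rewrite /norm3 /dhat dot3Z sqrtrM ?exprn_ge0 ?invr_ge0 ?ltW // sqrtr_sqr.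
by rewrite -/(norm3 _) -/(dist P j k) gtr0_norm ?invr_gt0 // mulVf // gt_eqF.
Qed.

Lemma costheta_le1 j k : j != k -> `|costheta P nh j k| <= 1.
Proof.
move=> jk; rewrite /costheta; apply: (le_trans (dot3_cs _ _ _)).
by rewrite nh1 norm3_dhat // mulr1.
Qed.

Lemma cosphi_le1 j k : `|cosphi nh j k| <= 1.
Proof. by rewrite /cosphi; apply: (le_trans (dot3_cs _ _ _)); rewrite !nh1 mulr1. Qed.

Local Open Scope classical_set_scope.
Lemma n0 : (0 < n)%N. Proof. lia. Qed.
Lemma n1 : (1 < n)%N. Proof. lia. Qed.
Definition i0 : 'I_n := Ordinal n0.
Definition i1 : 'I_n := Ordinal n1.
Lemma i01 : i0 != i1. Proof. by []. Qed.

Lemma dmin_props : 0 < dmin P /\ forall j l, j != l -> dmin P <= dist P j l.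
Proof.
have [p pP pmin] := @arg_minP _ _ _ (i0, i1) (fun p : 'I_n * 'I_n => p.1 != p.2)
   (fun p => dist P p.1 p.2) i01.
set delta := dist P p.1 p.2.
have dpos : 0 < delta by apply: dist_gt0.
have lb : lbound [set r | exists j l, j != l /\ r = dist P j l] delta.
  by move=> r [j [l [jl ->]]]; apply: (pmin (j, l)).
have ne : [set r | exists j l, j != l /\ r = dist P j l] (dist P i0 i1).
  by exists i0, i1; split => //; exact: i01.
split.
  apply: lt_le_trans dpos _; apply: lb_le_inf => //.
  by exists (dist P i0 i1).
move=> j l jl.
have := @ge_inf _ [set r | exists j l, j != l /\ r = dist P j l] (ex_intro _ delta lb).
by apply; exists j, l.
Qed.

Lemma mmax_props : (forall j, m j <= mmax m) /\ 0 < mmax m.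
Proof.
have ub : ubound [set r | exists j, r = m j] (\sum_k m k).
  move=> r [j ->]; rewrite (bigD1 j) //= lerDl.
  by apply: sumr_ge0 => k _; apply: ltW.
have hs : has_sup [set r | exists j, r = m j].
  by split; [exists (m i0), i0 | exists (\sum_k m k)].
have H := sup_upper_bound hs.
have le : forall j, m j <= mmax m by move=> j; apply: H; exists j.
by split => //; apply: lt_le_trans (m0 i0) (le i0).
Qed.

Definition cc : R := G * mmax m / w.
Definition Bm (j k : 'I_n) : R := if j == k then
  \sum_(l < n | l != j) 2 * cc / dist P j l ^+ 3 else 4 * cc / dist P j k ^+ 3.

Lemma cc_ge0 : 0 <= cc.
Proof.
rewrite /cc; apply: divr_ge0; last exact: ltW.
by apply: mulr_ge0; apply: ltW => //; case: mmax_props.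
Qed.

Lemma Bm_sym j k : Bm j k = Bm k j.
Proof.
rewrite /Bm; case: (eqVneq j k) => [->//|jk].
by rewrite dist_sym.
Qed.

Lemma coef_le (a D : R) : 0 < D -> 0 <= a -> a <= mmax m ->
  G * a / (D * w) <= cc / D.
Proof.
move=> D0 a0 aM.
have -> : G * a / (D * w) = (G * a / w) / D by field; apply/andP; split; apply: lt0r_neq0.
rewrite ler_pM2r ?invr_gt0 // /cc ler_pM2r ?invr_gt0 // ler_pM2l //.
Qed.

Lemma prod_le (a b A B : R) : 0 <= a -> a <= A -> 0 <= b -> b <= B -> a * b <= A * B.
Proof. move=> a0 aA b0 bB; apply: ler_pM => //. Qed.

Lemma entry_bound j k : `|gmat P nh G w m j k| <= Bm j k.
Proof.
have [hm M0] := mmax_props.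
rewrite /gmat mxE /Bm; case: (eqVneq j k) => [e|jk].
  subst k.
  apply: (le_trans (ler_norm_sum _ _ _)); apply: ler_sum => l lj.
  have jl : j != l by rewrite eq_sym.
  have D0 : 0 < dist P j l ^+ 3 by apply: exprn_gt0; apply: dist_gt0.
  have ht := costheta_le1 _ _ jl.
  have t2 : costheta P nh j l ^+ 2 <= 1.
    rewrite -real_normK ?num_real //; apply: exprn_ile1 => //; exact: normr_ge0.
  have t20 := sqr_ge0 (costheta P nh j l).
  apply: (@le_trans _ _ ((cc / dist P j l ^+ 3) * 2)); last by rewrite mulrC mulrA.
  rewrite normrM; apply: prod_le.
  - exact: normr_ge0.
  - rewrite ger0_norm; last first.
      by apply: divr_ge0; [apply: mulr_ge0; apply: ltW|apply: mulr_ge0; apply: ltW].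
    by apply: coef_le => //; apply: ltW.
  - exact: normr_ge0.
  - rewrite ler_norml; apply/andP; split; lra.
have D0 : 0 < dist P j k ^+ 3 by apply: exprn_gt0; apply: dist_gt0.
have kj : k != j by rewrite eq_sym.
have h1 := costheta_le1 _ _ jk; have h2 := costheta_le1 _ _ kj.
have h3 := cosphi_le1 j k.
have sq0 : 0 <= Num.sqrt (m j * m k) by apply: sqrtr_ge0.
have sqM : Num.sqrt (m j * m k) <= mmax m.
  rewrite -(ger0_norm (ltW M0)) -sqrtr_sqr ler_sqrt ?sqr_ge0 // expr2.
  by apply: ler_pM; [apply: ltW; apply: m0 | apply: ltW; apply: m0 | apply: hm | apply: hm].
apply: (@le_trans _ _ ((cc / dist P j k ^+ 3) * 4)); last by rewrite mulrC mulrA.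
rewrite normrM normrN; apply: prod_le.
- exact: normr_ge0.
- rewrite ger0_norm; last first.
    apply: divr_ge0; first by apply: mulr_ge0; [exact: ltW G0 | exact: sq0].
    by apply: mulr_ge0; [exact: ltW D0 | exact: ltW w0].
  exact: coef_le.
- exact: normr_ge0.
- apply: (le_trans (ler_normD _ _)).
  rewrite normrM normrM (ger0_norm (_ : (0:R) <= 3)); last by [].
  have : `|costheta P nh j k| * `|costheta P nh k j| <= 1 * 1.
    by apply: ler_pM; rewrite ?normr_ge0.
  rewrite mul1r -mulrA; lra.
Qed.

Lemma row_sum j : \sum_k Bm j k =
  6 * cc * \sum_(l < n | l != j) (dist P j l ^+ 3)^-1.
Proof.
rewrite (bigD1 j) //=.
rewrite (eq_bigr (fun k => 4 * cc / dist P j k ^+ 3)); last first.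
  by move=> k kj; rewrite /Bm eq_sym (negbTE kj).
rewrite /Bm eqxx.
rewrite -big_split mulr_sumr; apply: eq_bigr => l _.
match goal with |- ?f ?u ?v = ?w => change (u + v = w) end; ring.
Qed.

Lemma Tj_bounds j :
  \sum_(l < n | l != j) (dmin P / dist P j l) ^+ 3 <= (n - 1)%:R /\
  \sum_(l < n | l != j) (dmin P / dist P j l) ^+ 3 <= 48 * ln ((n - 1)%:R : R) + 126.
Proof.
have [dpos dsep] := dmin_props.
have e : \sum_(l < n | l != j) (dmin P / dist P j l) ^+ 3 =
   \sum_(l in [set~ j]%SET) (dmin P / dist P j l) ^+ 3.
  by apply: eq_bigl => l; rewrite in_setC1.
have card : #|[set~ j]%SET| = (n - 1)%N by rewrite cardsC1 card_ord subn1.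
rewrite e; split.
  apply: (@le_trans _ _ (\sum_(l in [set~ j]%SET) (1 : R))).
    apply: ler_sum => l; rewrite in_setC1 => lj.
    apply: exprn_ile1; first by apply: divr_ge0; apply: ltW => //; apply: dist_gt0; rewrite eq_sym.
    rewrite ler_pdivrMr ?mul1r; first by apply: dsep; rewrite eq_sym.
    by apply: dist_gt0; rewrite eq_sym.
  by rewrite sumr_const card.
apply: (le_trans (@sum_Phi R n P (dmin P) j dpos dsep (n - 1) [set~ j]%SET card _)).
  by rewrite in_setC1 eqxx.
apply: Phi_log; lia.
Qed.

Lemma main_bound : opnorm (gmat P nh G w m) <=
  gamma P G w m * Num.min (6 * (n - 1)%:R) (288 * ln ((n - 1)%:R) + 966).
Proof.
have [dpos dsep] := dmin_props.
have [hm M0] := mmax_props.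
set L := gamma P G w m * _.
have g0 : 0 <= gamma P G w m.
  rewrite /gamma; apply: divr_ge0; first by apply: mulr_ge0; apply: ltW.
  by apply: mulr_ge0; [apply: exprn_ge0; apply: ltW | apply: ltW].
have hrow : forall j, \sum_k Bm j k <= L.
  move=> j; rewrite row_sum.
  have [T1 T2] := Tj_bounds j.
  have e : 6 * cc * \sum_(l < n | l != j) (dist P j l ^+ 3)^-1 =
     gamma P G w m * (6 * \sum_(l < n | l != j) (dmin P / dist P j l) ^+ 3).
    have -> : \sum_(l < n | l != j) (dmin P / dist P j l) ^+ 3 =
       dmin P ^+ 3 * \sum_(l < n | l != j) (dist P j l ^+ 3)^-1.
      by rewrite mulr_sumr; apply: eq_bigr => l _; rewrite expr_div_n.
    rewrite /gamma /cc; field.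
    by apply/andP; split; apply: lt0r_neq0 => //; apply: exprn_gt0.
  rewrite e /L; apply: ler_wpM2l => //.
  rewrite le_min; apply/andP; split; lra.
apply: (@opnorm_le R n _ Bm).
- exact: entry_bound.
- exact: Bm_sym.
- exact: hrow.
- apply: le_trans (hrow i0); apply: sumr_ge0 => k _.
  exact: le_trans (normr_ge0 _) (entry_bound i0 k).
Qed.

End Main.

Theorem proposition2 (R : realType) (n : nat) (w G : R)
  (m : 'I_n -> R) (P nh : 'I_n -> 'rV[R]_3) :
  (2 <= n)%N -> 0 < w -> 0 < G -> (forall j, 0 < m j) ->
  (forall j k, j != k -> P j != P k) ->
  (forall j, norm3 (nh j) = 1) ->
  opnorm (gmat P nh G w m) <=
    gamma P G w m * Num.min (6 * (n - 1)%:R)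
                            (288 * ln ((n - 1)%:R) + 966).
Proof.
move=> n2 w0 G0 m0 Pd nh1.
by apply: main_bound.
Qed.
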